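(* For $n\ge1$ let $\mathbb{T}_n$ be $\mathbb{C}^n$ with basis $e_1,\dots,e_n$ and product $(a\cdot b)^i=\sum_{k=1}^i a^k b^{i-k+1}$, i.e. $e_i\cdot e_j=e_{i+j-1}$ if $i+j-1\le n$ and $e_i\cdot e_j=0$ otherwise. Then for every $n$, $\mathbb{T}_n$ is an associative Novikov algebra. Moreover: (i) a symmetric bilinear form $g=(g_{ij})$ on $\mathbb{T}_n$ satisfies $g(a\cdot b,c)=g(a,c\cdot b)$ for all $a,b,c$ if and only if $g_{ij}=g_{1,i+j-1}$ when $1\le i+j-1\le n$ and $g_{ij}=0$ otherwise; such a form is nondegenerate if $g_{1n}\neq0$; (ii) there is no nonzero skew-symmetric bilinear form $f$ on $\mathbb{T}_n$ satisfying both $f(a\cdot b,c)=f(a,c\cdot b)$ and $f(a\cdot b,c)+f(b\cdot c,a)+f(c\cdot a,b)=0$ for all $a,b,c\in\mathbb{T}_n$.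
   Context: A Novikov algebra is a complex vector space with a bilinear product $\cdot$ satisfying $(a\cdot b)\cdot c=(a\cdot c)\cdot b$ and $(a\cdot b)\cdot c-a\cdot(b\cdot c)=(b\cdot a)\cdot c-b\cdot(a\cdot c)$ for all $a,b,c$. For a bilinear form $g$, $g_{ij}=g(e_i,e_j)$. *)

(* Defs.v *)
From HB Require Import structures.
From mathcomp Require Import all_boot all_order all_algebra.
From mathcomp Require Import complex.
From mathcomp Require Import Rstruct.
From Stdlib Require Import Rdefinitions.
Set Implicit Arguments. Unset Strict Implicit. Unset Printing Implicit Defensive.
Import Order.TTheory GRing.Theory Num.Theory.
Local Open Scope ring_scope.

Notation CC := (Rdefinitions.R)[i].

(* Vectors of T_n = C^n are row vectors 'rV[CC]_n; basis vector e_{i+1} is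
   delta at index i : 'I_n (0-based indexing). *)
Notation vecT n := 'rV[CC]_n.

Definition tmul (n : nat) (a b : vecT n) : vecT n :=
  \row_(i < n) \sum_(k < n) \sum_(l < n | (nat_of_ord k + nat_of_ord l)%N == nat_of_ord i) a 0 k * b 0 l.

Definition bform (n : nat) (g : 'M[CC]_n) (a b : vecT n) : CC :=
  \sum_(i < n) \sum_(j < n) a 0 i * g i j * b 0 j.

Definition t_nondegenerate (n : nat) (g : 'M[CC]_n) : Prop :=
  forall a : vecT n, (forall b : vecT n, bform g a b = 0) -> a = 0.

Definition is_novikov (n : nat) (mul : vecT n -> vecT n -> vecT n) : Prop :=
  forall a b c : vecT n,
    mul (mul a b) c = mul (mul a c) b /\
    mul (mul a b) c - mul a (mul b c) = mul (mul b a) c - mul b (mul a c).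

Definition is_associative (n : nat) (mul : vecT n -> vecT n -> vecT n) : Prop :=
  forall a b c : vecT n, mul (mul a b) c = mul a (mul b c).

Definition t_invariant (n : nat) (g : 'M[CC]_n) : Prop :=
  forall a b c : vecT n, bform g (tmul a b) c = bform g a (tmul c b).

(* Main.v *)
Require Import Defs.
From mathcomp Require Import all_boot all_order all_algebra complex Rstruct.
From mathcomp Require Import zify.
Import GRing.Theory Num.Theory.
Local Open Scope ring_scope.

Lemma if0M (b : bool) (x y : CC) : (if b then x else 0) * y = if b then x * y else 0.
Proof. by case: b; rewrite ?mul0r. Qed.
Lemma Mif0 (b : bool) (x y : CC) : y * (if b then x else 0) = if b then y * x else 0.
Proof. by case: b; rewrite ?mulr0. Qed.

Section S.
Variable N : nat.
Implicit Types a b c : vecT N.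

Lemma tmulE a b i : tmul a b 0 i =
  \sum_(k < N) \sum_(l < N) (if (k + l == i)%N then a 0 k * b 0 l else 0).
Proof. by rewrite mxE; apply: eq_bigr => k _; rewrite big_mkcond. Qed.

Definition gr (g : 'M[CC]_N) (m : nat) (j : 'I_N) :=
  \sum_(i < N) (if m == i then g i j else 0).
Definition gc (g : 'M[CC]_N) (i : 'I_N) (m : nat) :=
  \sum_(j < N) (if m == j then g i j else 0).

Lemma bform_tmul_l g a b c : bform g (tmul a b) c =
  \sum_(k < N) \sum_(l < N) \sum_(j < N) a 0 k * b 0 l * c 0 j * gr g (k + l) j.
Proof.
rewrite /bform /gr.
under eq_bigr => i _ do under eq_bigr => j _ do
  rewrite tmulE big_distrl big_distrl /=.
under [RHS]eq_bigr => k _ do under eq_bigr => l _ do under eq_bigr => j _ do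
  rewrite big_distrr /=.
rewrite exchange_big /=.
under eq_bigr => j _ do rewrite exchange_big /=.
under eq_bigr => j _ do under eq_bigr => k _ do under eq_bigr => i _ do
  rewrite big_distrl big_distrl /=.
rewrite exchange_big /=; apply: eq_bigr => k _.
under eq_bigr => j _ do rewrite exchange_big /=.
rewrite exchange_big /=; apply: eq_bigr => l _.
apply: eq_bigr => j _; apply: eq_bigr => i _.
rewrite !if0M Mif0; case: eqP => // _.
by rewrite mulrAC.
Qed.

Lemma bform_tmul_r g a b c : bform g a (tmul c b) =
  \sum_(i < N) \sum_(k < N) \sum_(l < N) a 0 i * c 0 k * b 0 l * gc g i (k + l).
Proof.
rewrite /bform /gc.
under eq_bigr => i _ do under eq_bigr => j _ do
  rewrite tmulE big_distrr /=.
apply: eq_bigr => i _.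
rewrite exchange_big /=; apply: eq_bigr => k _.
under eq_bigr => j _ do rewrite big_distrr /=.
rewrite exchange_big /=; apply: eq_bigr => l _.
rewrite big_distrr /=; apply: eq_bigr => j _.
rewrite !Mif0; case: eqP => // _.
by rewrite -!mulrA; congr (_ * _); rewrite mulrC -mulrA.

Qed.

Lemma sum_delta_lt (m : nat) (h : (m < N)%N) (F : 'I_N -> CC) :
  \sum_(i < N) (if m == i then F i else 0) = F (Ordinal h).
Proof.
rewrite (bigD1 (Ordinal h)) //= eqxx big1 ?addr0 // => i hi.
case: eqP => // him; exfalso; move/eqP: hi; apply; apply: val_inj => /=; by rewrite him.
Qed.

Lemma sum_delta_ge (m : nat) (h : (N <= m)%N) (F : 'I_N -> CC) :
  \sum_(i < N) (if m == i then F i else 0) = 0.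
Proof.
rewrite big1 // => i _; case: eqP => // him; have := ltn_ord i; rewrite -him.
by rewrite ltnNge h.
Qed.

Definition e (q : 'I_N) : vecT N := delta_mx 0 q.

Lemma e_mul q k (y : CC) : e q 0 k * y = if k == q then y else 0.
Proof. by rewrite /e mxE eqxx /=; case: eqP; rewrite ?mul1r ?mul0r. Qed.

Lemma sum_if1 q (F : 'I_N -> CC) : \sum_(k < N) (if k == q then F k else 0) = F q.
Proof.
rewrite (bigD1 q) //= eqxx big1 ?addr0 // => i /negbTE -> //.
Qed.

Lemma collapse3 p q r (X : 'I_N -> 'I_N -> 'I_N -> CC) :
  \sum_(k < N) \sum_(l < N) \sum_(j < N) e p 0 k * e q 0 l * e r 0 j * X k l j
  = X p q r.
Proof.
under eq_bigr => k _ do under eq_bigr => l _ do under eq_bigr => j _ do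
  rewrite -!mulrA.
under eq_bigr => k _ do under eq_bigr => l _ do rewrite -big_distrr.
under eq_bigr => k _ do rewrite -big_distrr /= e_mul.
rewrite sum_if1.
under eq_bigr => l _ do rewrite -big_distrr /= e_mul.
rewrite sum_if1.
under eq_bigr => l _ do rewrite e_mul.
by rewrite sum_if1.
Qed.

Lemma ord_eta (j : 'I_N) (h : (val j < N)%N) : Ordinal h = j.
Proof. exact: val_inj. Qed.

Lemma inv_point (hn : (0 < N)%N) g : t_invariant g ->
  forall j k : 'I_N, g j k = gc g (Ordinal hn) (j + k).
Proof.
move=> H j k; have := H (e (Ordinal hn)) (e j) (e k).
rewrite bform_tmul_l bform_tmul_r !collapse3 /= add0n addnC => <-.
by rewrite /gr sum_delta_lt ord_eta.
Qed.

Lemma gc_ge g i m : (N <= m)%N -> gc g i m = 0.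
Proof. by move=> h; rewrite /gc sum_delta_ge. Qed.

Lemma point_inv (H : nat -> CC) (g : 'M[CC]_N) :
  (forall j k : 'I_N, g j k = H (j + k)%N) -> (forall m, (N <= m)%N -> H m = 0) ->
  t_invariant g.
Proof.
move=> Hg H0 a b c; rewrite bform_tmul_l bform_tmul_r.
apply: eq_bigr => k _.
have E1 : forall (l j : 'I_N), gr g (k + l) j = H (k + l + j)%N.
  move=> l j; rewrite /gr; case: (ltnP (k + l) N) => h.
    by rewrite sum_delta_lt Hg.
  by rewrite sum_delta_ge // H0 // (leq_trans h) // leq_addr.
have E2 : forall (l j : 'I_N), gc g k (j + l) = H (k + l + j)%N.
  move=> l j; rewrite /gc; case: (ltnP (j + l) N) => h.
    by rewrite sum_delta_lt Hg /= addnA addnAC.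
  by rewrite sum_delta_ge // H0 //; apply: leq_trans h _; rewrite addnAC leq_add2r leq_addl.
under eq_bigr => l _ do under eq_bigr => j _ do rewrite E1.
under [RHS]eq_bigr => j _ do under eq_bigr => l _ do rewrite E2.
rewrite [RHS]exchange_big /=; apply: eq_bigr => l _; apply: eq_bigr => j _.
by congr (_ * _); rewrite mulrAC.
Qed.

Lemma tmul_comm a b : tmul a b = tmul b a.
Proof.
apply/rowP => i; rewrite !tmulE exchange_big /=.
by apply: eq_bigr => k _; apply: eq_bigr => l _; rewrite addnC mulrC.
Qed.

Lemma pushl (P : bool) (S : 'I_N -> 'I_N -> bool) (F : 'I_N -> 'I_N -> CC) y :
  (if P then (\sum_(k < N) \sum_(l < N) (if S k l then F k l else 0)) * y else 0)
  = \sum_(k < N) \sum_(l < N) (if S k l then (if P then F k l * y else 0) else 0).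
Proof.
case: P; last by rewrite big1 // => k _; rewrite big1 // => l _; case: (S k l).
rewrite big_distrl; apply: eq_bigr => k _; rewrite big_distrl; apply: eq_bigr => l _.
exact: if0M.
Qed.

Lemma pushr (P : bool) (S : 'I_N -> 'I_N -> bool) (F : 'I_N -> 'I_N -> CC) y :
  (if P then y * (\sum_(k < N) \sum_(l < N) (if S k l then F k l else 0)) else 0)
  = \sum_(k < N) \sum_(l < N) (if S k l then (if P then y * F k l else 0) else 0).
Proof.
case: P; last by rewrite big1 // => k _; rewrite big1 // => l _; case: (S k l).
rewrite big_distrr; apply: eq_bigr => k _; rewrite big_distrr; apply: eq_bigr => l _.
exact: Mif0.
Qed.

Lemma collapse_m (i : 'I_N) (p : nat) (G : nat -> bool) (X : CC) :
  (forall m, (N <= m)%N -> G m = false) ->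
  \sum_(m < N) (if p == m then (if G m then X else 0) else 0) =
  (if G p then X else 0).
Proof.
move=> HG; case: (ltnP p N) => h.
  by rewrite (@sum_delta_lt p h (fun m : 'I_N => if G m then X else 0)).
by rewrite (@sum_delta_ge p h (fun m : 'I_N => if G m then X else 0)) HG.
Qed.

Lemma tmul_assoc a b c : tmul (tmul a b) c = tmul a (tmul b c).
Proof.
apply/rowP => i; rewrite !tmulE.
have HG : forall s : nat, forall m, (N <= m)%N -> ((m + s)%N == i) = false.
  move=> s m hm; apply/negbTE; rewrite neq_ltn; apply/orP; right.
  exact: leq_trans (ltn_ord i) (leq_trans hm (leq_addr _ _)).
have HG' : forall s : nat, forall m, (N <= m)%N -> ((s + m)%N == i) = false.
  by move=> s m hm; rewrite addnC HG.
under eq_bigr => m _ do under eq_bigr => j _ do rewrite tmulE pushl.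
under [RHS]eq_bigr => k _ do under eq_bigr => m _ do rewrite tmulE pushr.
(* LHS order (m,j,k,l) -> (k,l,j,m) *)
rewrite exchange_big /=.
under eq_bigr => j _ do rewrite exchange_big /=.
rewrite exchange_big /=.
(* RHS order (k,m,l,j) -> (k,l,j,m) *)
apply: eq_bigr => k _.
rewrite [RHS]exchange_big /=.
under [RHS]eq_bigr => l _ do rewrite exchange_big /=.
under eq_bigr => j _ do rewrite exchange_big /=.
rewrite exchange_big /=.
apply: eq_bigr => l _; apply: eq_bigr => j _.
rewrite (collapse_m i _ (fun m => (m + j)%N == i) _ (HG j)).
rewrite (collapse_m i _ (fun m => (k + m)%N == i) _ (HG' k)).
by rewrite addnA mulrA.
Qed.

Lemma bform_e g a q : bform g a (e q) = \sum_(i < N) a 0 i * g i q.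
Proof.
apply: eq_bigr => i _; rewrite (bigD1 q) //= big1 ?addr0.
  by rewrite /e mxE !eqxx /= mulr1.
by move=> j /negbTE hj; rewrite /e mxE hj /= mulr0.
Qed.
End S.

Arguments e {N} q.
Arguments gc {N} g i m.
Arguments gr {N} g m j.
Theorem proposition5p1 (n : nat) (hn : (0 < n)%N) :
  is_associative (@tmul n) /\ is_novikov (@tmul n) /\
  (* (i) characterization of symmetric invariant forms *)
  (forall g : 'M[CC]_n, g^T = g ->
     (t_invariant g <->
      ((forall (i j i0 k : 'I_n), val i0 = 0%N -> val k = (val i + val j)%N ->
          g i j = g i0 k) /\
       (forall (i j : 'I_n), (n <= val i + val j)%N -> g i j = 0)))) /\
  (* nondegeneracy when g_{1n} <> 0 *)
  (forall g : 'M[CC]_n, g^T = g -> t_invariant g ->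
     (exists i0 k : 'I_n, [/\ val i0 = 0%N, val k = n.-1 & g i0 k != 0]) ->
     t_nondegenerate g) /\
  (* (ii) no nonzero skew-symmetric form with both properties *)
  (forall f : 'M[CC]_n, f^T = - f -> t_invariant f ->
     (forall a b c : vecT n,
        bform f (tmul a b) c + bform f (tmul b c) a + bform f (tmul c a) b = 0) ->
     f = 0).
Proof.
split; first exact: tmul_assoc.
split.
  move=> a b c; split.
    by rewrite tmul_assoc [tmul b c]tmul_comm -tmul_assoc.
  by rewrite !tmul_assoc !subrr.
split.
  move=> g _; split.
    move=> Hinv; have P := @inv_point _ hn _ Hinv; split.
      move=> i j i1 k hi1 hk; rewrite P.
      have -> : i1 = Ordinal hn by apply: val_inj.
      by rewrite /gc -hk (@sum_delta_lt _ _ (ltn_ord k)) ord_eta.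
    by move=> i j hij; rewrite P gc_ge.
  move=> [H1 H2]; apply: (@point_inv n (gc g (Ordinal hn)) g); last first.
    by move=> m hm; apply: gc_ge.
  move=> j k; case: (ltnP (j + k) n) => h.
    by rewrite /gc (@sum_delta_lt _ _ h); apply: H1.
  by rewrite H2 // gc_ge.
split.
  move=> g _ Hinv [i1 [k [hi1 hk hg]]] a Ha.
  have P := @inv_point _ hn _ Hinv.
  have key : forall p (hp : (p < n)%N), a 0 (Ordinal hp) = 0.
    elim/ltn_ind => p IH hp.
    have hq : (n.-1 - p < n)%N by lia.
    have := Ha (e (Ordinal hq)); rewrite bform_e (bigD1 (Ordinal hp)) //= big1 ?addr0.
      rewrite P /=.
      have -> : (p + (n.-1 - p))%N = (i1 + k)%N by rewrite hi1 hk; lia.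
      by rewrite -P => /eqP; rewrite mulf_eq0 (negbTE hg) orbF => /eqP.
    move=> i hi; have hip : val i != p.
      by apply: contra hi => /eqP h; apply/eqP/val_inj.
    case: (ltnP i p) => hlt.
      by rewrite -(@ord_eta _ i (ltn_ord i)) IH // mul0r.
    rewrite P gc_ge ?mulr0 //=.
    have := ltn_ord i; change (is_true (nat_of_ord i != p)) in hip; move: hip hlt; lia.
  apply/rowP => j; rewrite mxE; have := key _ (ltn_ord j); by rewrite ord_eta.
move=> f hT Hinv _; have P := @inv_point _ hn _ Hinv.
apply/matrixP => i j; rewrite mxE.
have h1 : f j i = - f i j.
  by have := congr1 (fun M : 'M[CC]_n => M i j) hT; rewrite /= !mxE.
have h2 : f i j = - f i j by rewrite -h1 P [in RHS]P addnC.
have : f i j *+ 2 == 0 by rewrite mulr2n {1}h2 addNr.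
by rewrite mulrn_eq0 /= => /eqP.
Qed.
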